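(* Every cyclic triangulation of a closed surface is $q$-equivelar for some $q$ with either $q=3k$ or $q=3k+1$ for some integer $k\ge 1$.
   Context: For an integer $n\ge 3$ identify a vertex set with $\mathbb{Z}_n=\{0,1,\dots,n-1\}$. A cyclic triangulation with $n$ vertices is a simplicial complex on the vertex set $\mathbb{Z}_n$ that triangulates a closed (compact, connected, boundaryless) surface and is invariant under the shift $i\mapsto i+1$. A triangulation is $q$-equivelar if every vertex lies in exactly $q$ triangles. *)

(* Defs.v *)
From mathcomp Require Import all_boot.
Set Implicit Arguments. Unset Strict Implicit. Unset Printing Implicit Defensive.

(* A (pure, 2-dimensional) simplicial complex on the vertex set Z_n = 'I_n is
   given by its set T of triangles (3-element vertex sets); edges and vertices
   are the faces of the triangles. *)

Definition shift (n : nat) (i : 'I_n) : 'I_n := ordS i.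

Definition edge_deg n (T : {set {set 'I_n}}) (a b : 'I_n) : nat :=
  #|[set t in T | (a \in t) && (b \in t)]|.

(* x, y lie in a common triangle (1-skeleton adjacency, reflexive on used vertices) *)
Definition adj n (T : {set {set 'I_n}}) : rel 'I_n :=
  fun x y => [exists t in T, (x \in t) && (y \in t)].

Definition link_rel n (T : {set {set 'I_n}}) (v : 'I_n) : rel 'I_n :=
  fun a b => [set v; a; b] \in T.

Definition link_vertices n (T : {set {set 'I_n}}) (v : 'I_n) : {set 'I_n} :=
  [set a | [exists b, link_rel T v a b]].

(* T is a triangulation of a closed (compact, connected, boundaryless)
   surface with vertex set 'I_n: every simplex is a triangle, every vertex
   is used, every edge lies in exactly two triangles, the link of every
   vertex is connected (hence a single cycle), and the complex is connected. *)
Definition closed_surface_triangulation n (T : {set {set 'I_n}}) : Prop :=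
  [/\ forall t, t \in T -> #|t| = 3,
      forall v : 'I_n, exists2 t, t \in T & v \in t,
      forall a b : 'I_n, a != b -> adj T a b -> edge_deg T a b = 2,
      forall v a b : 'I_n, a \in link_vertices T v -> b \in link_vertices T v ->
                       connect (link_rel T v) a b
    & forall x y : 'I_n, connect (adj T) x y].

Definition shift_invariant n (T : {set {set 'I_n}}) : Prop :=
  forall t, t \in T -> [set shift x | x in t] \in T.

Definition cyclic_triangulation n (T : {set {set 'I_n}}) : Prop :=
  3 <= n /\ closed_surface_triangulation T /\ shift_invariant T.

Definition equivelar n (T : {set {set 'I_n}}) (q : nat) : Prop :=
  forall v : 'I_n, #|[set t in T | v \in t]| = q.

(* Main.v *)
Require Import Defs.
From mathcomp Require Import all_boot all_algebra.
From Stdlib Require Import Lia.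
Set Implicit Arguments. Unset Strict Implicit. Unset Printing Implicit Defensive.
Lemma mod3_fix (X : finType) (f : X -> X) (S : {set X}) :
  (forall x, x \in S -> f x \in S) -> (forall x, x \in S -> f (f (f x)) = x) ->
  #|S| %% 3 = #|[set x in S | f x == x]| %% 3.
Proof.
have [k] := ubnP #|S|; elim: k S => // k IH S ltS fS f3.
case: (pickP [pred x in S | f x != x]) => [x /= /andP[xS fx]|H]; last first.
  congr (_ %% 3); apply: eq_card => y; rewrite inE.
  by case yS: (y \in S) => //=; move: (H y); rewrite /= yS /=; case: eqP.
have ffx : f (f x) != x.
  by apply: contra fx => /eqP e; rewrite -{1}e f3.
have ffx2 : f (f x) != f x.
  by apply: contra fx => /eqP e; rewrite -{2}(f3 x xS) e -{1}e.
set S' := S :\ x :\ f x :\ f (f x).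
have eS : #|S| = #|S'|.+3.
  have h1 : f x \in S :\ x by rewrite !inE fx fS.
  have h2 : f (f x) \in S :\ x :\ f x by rewrite !inE ffx ffx2 !fS.
  by rewrite (cardsD1 x) xS (cardsD1 (f x) (S :\ x)) h1 (cardsD1 (f (f x)) (S :\ x :\ f x)) h2.
have mS' y : (y \in S') = [&& y != f (f x), y != f x, y != x & y \in S].
  by rewrite !inE.
have fS' : forall y, y \in S' -> f y \in S'.
  move=> y; rewrite !mS' => /and4P[y1 y2 y3 yS]; rewrite fS // andbT.
  apply/and3P; split; apply/eqP => e.
  - by move: y2; rewrite -(f3 y yS) e !f3 ?fS // eqxx.
  - by move: y3; rewrite -(f3 y yS) e !f3 ?fS // eqxx.
  - by move: y1; rewrite -(f3 y yS) e eqxx.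
have f3' : forall y, y \in S' -> f (f (f y)) = y.
  by move=> y; rewrite mS' => /and4P[_ _ _]; apply: f3.
have lt' : #|S'| < k by move: ltS; rewrite eS !ltnS => /ltnW /ltnW.
rewrite eS -addn3 modnDr (IH S' lt' fS' f3').
congr (_ %% 3); apply: eq_card => y; rewrite !inE.
case: (y =P x) => [->|_]; first by rewrite (negbTE fx) !andbF.
case: (y =P f x) => [->|_]; first by rewrite (negbTE ffx2) !andbF.
case: (y =P f (f x)) => [->|_] //=.
by rewrite f3 // eq_sym (negbTE ffx) andbF.
Qed.
Import GRing.Theory.

Lemma nat3 N a b : 0 < a < N -> 0 < b < N -> (a * 3) %% N = 0 -> (b * 3) %% N = 0 ->
  a = b \/ a + b = N.
Proof.
have key c : 0 < c < N -> (c * 3) %% N = 0 -> c * 3 = N \/ c * 3 = N * 2.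
  move=> /andP[c0 cN] cm; have := divn_eq (c * 3) N; rewrite cm addn0.
  have : c * 3 %/ N < 3.
    by rewrite ltn_divLR ?(ltn_trans c0 cN) // mulnC ltn_pmul2l.
  case: (c * 3 %/ N) => [|[|[|k]]] //.
  - by move=> _; rewrite mul0n => /eqP; rewrite muln_eq0 orbF => /eqP c00; rewrite c00 in c0.
  - by move=> _; rewrite mul1n; left.
  - by move=> _ ->; right; rewrite mulnC.
move=> /[dup] ha /key {}key' /[dup] hb /(key b) kb /key' ka /kb {kb key'}.
move: ha hb ka => /andP[_ /ltP ?] /andP[_ /ltP ?].
rewrite -!multE -!plusE => -[?|?] [?|?]; lia.
Qed.

Section S.
Variable m : nat.
Local Notation N := m.+3.
Local Notation Z := 'I_N.
Local Open Scope ring_scope.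

Lemma shiftE (x : Z) : shift x = x + 1.
Proof. by apply: val_inj; rewrite /= addn1. Qed.

Definition tr (c : Z) (t : {set Z}) := [set x + c | x in t].

Variable T : {set {set Z}}.
Hypothesis shT : shift_invariant T.

Lemma trT c t : t \in T -> tr c t \in T.
Proof.
move=> tT; rewrite -[c]natr_Zp; elim: (nat_of_ord c) => [|k IH].
  by rewrite /tr (eq_imset _ (fun x => addr0 x)) imset_id.
have -> : tr k.+1%:R t = [set shift x | x in tr k%:R t].
  rewrite /tr -imset_comp; apply: eq_imset => x /=.
  by rewrite shiftE mulrS [1 + _]addrC; exact: addrA.
exact: shT IH.
Qed.

Definition deg (v : Z) := #|[set t in T | v \in t]|%N.

Lemma deg_le v (c : Z) : (deg v <= deg (v + c)%R)%N.
Proof.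
rewrite /deg -(card_imset _ (imset_inj (addIr c))).
apply: subset_leq_card; apply/subsetP => s /imsetP[t]; rewrite !inE => /andP[tT vt] ->.
by rewrite (trT c tT) /=; apply/imsetP; exists v.
Qed.

Lemma deg_const v : deg v = deg 0.
Proof.
apply/eqP; rewrite eqn_leq; have := deg_le 0 v; rewrite add0r => ->.
by have := deg_le v (- v); rewrite subrr => ->.
Qed.

Definition Bset := [set p : Z * Z | [&& p.1 != 0, p.2 != 0, p.1 != p.2 & [set 0; p.1; p.2] \in T]].
Definition r (p : Z * Z) : Z * Z := (p.2 - p.1, - p.1).

Lemma tri_tr a b c d : tr d [set a; b; c] = [set a + d; b + d; c + d].
Proof. by rewrite /tr !imsetU ?imsetU1 !imset_set1. Qed.

Lemma rB p : p \in Bset -> r p \in Bset.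
Proof.
case: p => x y; rewrite !inE /= => /and4P[x0 y0 xy tT].
rewrite subr_eq0 eq_sym xy oppr_eq0 x0 -subr_eq0 opprK subrK y0 /=.
have := trT (-x) tT; rewrite tri_tr add0r subrr.
congr (_ \in T); apply/setP => z; rewrite !inE.
by case: (z == -x); case: (z == 0); case: (z == y - x).
Qed.

Lemma r3 p : r (r (r p)) = p.
Proof.
case: p => x y; rewrite /r /=; congr pair.
  by rewrite !opprB addKr opprK subrK.
by rewrite opprB opprK subrK.
Qed.

Hypothesis tri3 : forall t, t \in T -> #|t| = 3%N.

Lemma fiber t : t \in T -> 0 \in t ->
  #|[set p in Bset | [set 0; p.1; p.2] == t]| = 2%N.
Proof.
move=> tT t0.
have : #|t :\ 0| = 2 by move: (tri3 tT); rewrite (cardsD1 0) t0 => -[].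
move/eqP/cards2P => -[a [b [ab e]]].
have : a \in t :\ 0 by rewrite e !inE eqxx.
have : b \in t :\ 0 by rewrite e !inE eqxx orbT.
rewrite !inE => /andP[b0 bt] /andP[a0 at_].
have te : t = [set 0; a; b] by apply/setP => z; rewrite -(setD1K t0) e !inE orbA.
have -> : [set p in Bset | [set 0; p.1; p.2] == t] = [set (a, b); (b, a)].
  apply/setP => -[x y]; rewrite !inE /=; apply/idP/idP.
    case/andP => /and4P[x0 y0 xy _] /eqP ext.
    have : x \in t by rewrite -ext !inE eqxx orbT.
    have : y \in t by rewrite -ext !inE eqxx !orbT.
    move=> yt xt; move: xt yt xy.
    rewrite te !inE (negbTE x0) (negbTE y0) /= => /orP[] /eqP -> /orP[] /eqP ->;
      rewrite ?eqxx ?orbT //.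
  case/orP => /eqP[-> ->]; rewrite a0 b0 ?ab 1?eq_sym ?ab /=; first by rewrite -te tT eqxx.
  have -> : [set 0; b; a] = t.
    by rewrite te; apply/setP => z; rewrite !inE; case: (z == 0); case: (z == a); case: (z == b).
  by rewrite tT eqxx.
by rewrite cards2 xpair_eqE (negbTE ab).
Qed.

Lemma cardB : #|Bset| = (2 * deg 0%R)%N.
Proof.
rewrite -sum1_card (partition_big (fun p => [set 0; p.1; p.2]) (fun t => t \in [set t in T | 0 \in t])).
  rewrite /deg mulnC -sum_nat_const; apply: eq_bigr => t; rewrite inE => /andP[tT t0].
  have := fiber tT t0; rewrite -sum1_card => <-; apply: eq_bigl => p; by rewrite inE.
case=> x y; rewrite !inE /= => /and4P[_ _ _ ->] //.
Qed.

Lemma trip (u x : Z) : u != 0 -> x != 0 -> u *+ 3 = 0 -> x *+ 3 = 0 -> u = x \/ u = - x.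
Proof.
move=> u0 x0 u3 x3.
have hv (z : Z) : z *+ 3 = 0 -> (z * 3 %% N)%N = 0%N.
  by move=> /(congr1 val); rewrite Zp_mulrn.
have pos (z : Z) : z != 0 -> (0 < z < N)%N.
  by move=> z0; rewrite ltn_ord andbT lt0n; apply: contra z0 => /eqP h; apply/eqP/val_inj.
case: (nat3 (pos _ u0) (pos _ x0) (hv _ u3) (hv _ x3)) => h; [left|right]; apply: val_inj => //=.
have -> : (N - x = u)%N by apply/eqP; rewrite -(eqn_add2r x) subnK ?h // ltnW.
by rewrite modn_small.
Qed.

Lemma Ffix p : p \in Bset -> r p == p -> p.2 = - p.1 /\ p.1 *+ 3 = 0.
Proof.
case: p => x y _; rewrite /r xpair_eqE /= => /andP[/eqP h1 /eqP h2].
split; first by [].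
rewrite -h2 in h1; rewrite mulrS mulr2n -{1}h1 -opprD addNr //.
Qed.

Lemma fixcard : #|[set p in Bset | r p == p]| = 0%N \/ #|[set p in Bset | r p == p]| = 2%N.
Proof.
case: (set_0Vmem [set p in Bset | r p == p]) => [->|[[x y] pF]]; first by left; rewrite cards0.
right; move: (pF); rewrite inE => /andP[xyB fxy].
have [/= ey x3] := Ffix xyB fxy.
move: (xyB); rewrite inE /= => /and4P[x0 y0 xy tT].
have xnx : x != - x by rewrite -ey.
have -> : [set p in Bset | r p == p] = [set (x, - x); (- x, x)].
  apply/setP => -[u v]; rewrite inE in_set2; apply/idP/idP.
    case/andP => uvB fuv; have [/= ev u3] := Ffix uvB fuv.
    move: (uvB); rewrite inE /= => /and4P[u0 _ _ _].
    by rewrite ev; case: (trip u0 x0 u3 x3) => ->; rewrite ?opprK eqxx ?orbT.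
  case/orP => /eqP[-> ->]; first by rewrite -ey; move: pF; rewrite inE.
  rewrite !inE /= oppr_eq0 x0 eq_sym xnx /=.
  apply/andP; split.
    suff -> : [set 0; -x; x] = [set 0; x; y] by [].
    by rewrite ey; apply/setP => z; rewrite !inE; case: (z == 0); case: (z == x); case: (z == -x).
  rewrite /r /= opprK xpair_eqE eqxx andbT; apply/eqP.
  apply/eqP; rewrite -subr_eq0 opprK -mulr2n -mulrSr x3 //.
by rewrite cards2 xpair_eqE (negbTE xnx).
Qed.
End S.

Theorem mainTheorem4 (n : nat) (T : {set {set 'I_n}}) :
  cyclic_triangulation T ->
  exists q k : nat, 1 <= k /\ (q = 3 * k \/ q = 3 * k + 1) /\ equivelar T q.
Proof.
case: n T => [|[|[|m]]] T [n3 [[tri3 cover edge2 _ _] shT]] //.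
set q := deg T 0%R.
have eqv : equivelar T q by move=> v; exact: (deg_const shT v).
have q2 : 2 <= q.
  have [t tT t0] := cover 0%R.
  have : 0 < #|t :\ 0%R| by move: (tri3 t tT); rewrite (cardsD1 0%R) t0 add1n => -[->].
  case/card_gt0P => a; rewrite !inE => /andP[a0 at_].
  have adj0a : adj T 0%R a by apply/existsP; exists t; rewrite tT t0 at_.
  have a0' : (0%R : 'I_m.+3) != a by rewrite eq_sym.
  have := edge2 0%R a a0' adj0a; rewrite /edge_deg => <-.
  apply: subset_leq_card; apply/subsetP => s; rewrite !inE => /andP[-> /andP[-> _]] //.
have hmod : q %% 3 = 0 \/ q %% 3 = 1.
  have := mod3_fix (rB shT) (fun p _ => r3 p); rewrite (cardB tri3) -/q.
  rewrite -modnMmr.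
  have : q %% 3 < 3 by rewrite ltn_mod.
  case: (q %% 3) => [|[|[|k]]] // _; case: (@fixcard m T) => ->; try by []; move=> _; by [left | right].
exists q, (q %/ 3); split; last split => //.
  move: (divn_eq q 3) q2 hmod; rewrite /leP -!multE -!plusE.
  move=> e /leP ? [] ?; apply/leP; lia.
move: (divn_eq q 3) hmod; rewrite -!multE -!plusE => e [] ?; [left|right]; lia.
Qed.
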